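(* Assume each $J_j'$ is a bijection of $\mathbb{R}$, and write $(\nabla J)^{-1}(\alpha):=((J_j')^{-1}(\alpha_j))_{j}$. Define, for $z=(q,\tilde\theta)\in\mathbb{R}^n\times\mathbb{R}^{|\mathcal E|}$ and $\sigma=(\alpha,\lambda,\eta,\nu)\in\mathbb{R}^n\times\mathbb{R}\times\mathbb{R}^{2|\mathcal E|}\times\mathbb{R}^n$, \[ \hat L(z,\sigma)=\sum_{j=1}^n J_j\big((\nabla J)^{-1}(\alpha)_j\big)+\alpha^T\big(q-(\nabla J)^{-1}(\alpha)\big)-\tfrac12\nu^TD\nu+\nu^T(q-d-CB\tilde\theta)-\lambda\mathbf 1^T(q-d)+\eta^T\big(H^T(q-d)-F\big), \] and the closed-loop system \[ T^z\dot z=-\nabla_z\hat L(z,\sigma),\qquad T^\sigma\dot\sigma=\big[\nabla_\sigma\hat L(z,\sigma)\big]^+_\eta, \] where $T^z,T^\sigma$ are diagonal with positive diagonal entries and the projection acts only on the $\eta$-components. Let $(z^*,\sigma^* )$, with $\eta^*\ge0$, be an equilibrium of this system. If a trajectory $(z(t),\sigma(t))$ of the system with $\eta(0)\ge0$ satisfies $\hat L(z^*,\sigma(t))\equiv\hat L(z^*,\sigma^* )$ and $\hat L(z(t),\sigma^* )\equiv\hat L(z^*,\sigma^* )$ for all $t\ge0$, then $\dot z\equiv0$ and $\dot\sigma\equiv0$.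
   Context: $(\mathcal N,\mathcal E)$ is a connected directed graph with $\mathcal N=\{1,\dots,n\}$; $C$ is its incidence matrix ($C_{j,e}=1$ if $e=(j,k)$, $-1$ if $e=(k,j)$, $0$ otherwise). $B$ and $D$ are diagonal with positive diagonal entries. $L:=CBC^T$, $H\in\mathbb{R}^{n\times 2|\mathcal E|}$ with $H^T=\begin{bmatrix} BC^TL^\dagger\\ -BC^TL^\dagger\end{bmatrix}$ ($L^\dagger$ Moore–Penrose inverse), $F=\begin{bmatrix}\overline F\\-\underline F\end{bmatrix}\in\mathbb{R}^{2|\mathcal E|}$, $d\in\mathbb{R}^n$. Each $J_j:\mathbb{R}\to\mathbb{R}$ is strictly convex and twice differentiable. Projection: for vectors $y,u$ of equal length, $([y]^+_u)_j=y_j$ if $y_j>0$ or $u_j>0$, and $0$ otherwise; here applied to the $\eta$-block of the gradient with $u=\eta$. (This system models generators' price-bidding dynamics, market dispatch/pricing dynamics, and linearized swing dynamics with $\omega\equiv\nu$.) *)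

(* Defs.v *)
From HB Require Import structures.
From mathcomp Require Import all_boot all_order all_algebra.
From mathcomp Require Import all_classical all_reals all_analysis.
Set Implicit Arguments. Unset Strict Implicit. Unset Printing Implicit Defensive.
Import Order.TTheory GRing.Theory Num.Theory.
Import numFieldNormedType.Exports.
Local Open Scope ring_scope.

Section Defs.
Variable R : realType.

Definition incidence (n m : nat) (src dst : 'I_m -> 'I_n) : 'M[R]_(n, m) :=
  \matrix_(j < n, e < m)
    (if src e == j then 1 else if dst e == j then -1 else 0).

(* Undirected adjacency of the underlying graph (for weak connectivity). *)
Definition adj (n m : nat) (src dst : 'I_m -> 'I_n) : rel 'I_n :=
  fun i j => [exists e, ((src e == i) && (dst e == j)) ||
                        ((src e == j) && (dst e == i))].

Definition connected_digraph (n m : nat) (src dst : 'I_m -> 'I_n) : Prop :=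
  (forall e, src e != dst e) /\
  injective (fun e => (src e, dst e)) /\
  (forall i j, connect (adj src dst) i j).

Definition posdiag (k : nat) (A : 'M[R]_k) : Prop :=
  is_diag_mx A /\ forall i, 0 < A i i.

Definition is_MP_inverse (k l : nat) (A : 'M[R]_(k, l)) (X : 'M[R]_(l, k)) : Prop :=
  [/\ A *m X *m A = A, X *m A *m X = X,
      (A *m X)^T = A *m X & (X *m A)^T = X *m A].

Definition strictly_convex (f : R -> R) : Prop :=
  forall x y a : R, x != y -> 0 < a -> a < 1 ->
    f (a * x + (1 - a) * y) < a * f x + (1 - a) * f y.

Definition twice_differentiable (f : R -> R) : Prop :=
  forall x : R, derivable f x 1 /\ derivable (derive1 f) x 1.

Definition dotv (k : nat) (u v : 'cV[R]_k) : R := (u^T *m v) 0 0.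

Definition grad (k : nat) (f : 'cV[R]_k -> R) (x : 'cV[R]_k) : 'cV[R]_k :=
  \col_i derive1 (fun s : R => f (x + s *: delta_mx i 0)) 0.

Definition proj_plus (k : nat) (y u : 'cV[R]_k) : 'cV[R]_k :=
  \col_j (if (0 < y j 0) || (0 < u j 0) then y j 0 else 0).

Definition dvec (k : nat) (x : R -> 'cV[R]_k) (t : R) : 'cV[R]_k :=
  \col_i derive1 (fun s => x s i 0) t.

Definition vderivable (k : nat) (x : R -> 'cV[R]_k) (t : R) : Prop :=
  forall i, derivable (fun s => x s i 0) t 1.

Definition Hmat (n m : nat) (C : 'M[R]_(n, m)) (B : 'M[R]_m) (Ldag : 'M[R]_n)
  : 'M[R]_(n, m + m) :=
  (col_mx (B *m C^T *m Ldag) (- (B *m C^T *m Ldag)))^T.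

(* The function \hat L(z, sigma), z = (q, th), sigma = (a, lam, eta, nu). *)
Definition Lhat (n m : nat) (J Jinv : 'I_n -> R -> R)
  (D : 'M[R]_n) (d : 'cV[R]_n) (C : 'M[R]_(n, m)) (B : 'M[R]_m)
  (H : 'M[R]_(n, m + m)) (F : 'cV[R]_(m + m))
  (q : 'cV[R]_n) (th : 'cV[R]_m)
  (a : 'cV[R]_n) (lam : R) (eta : 'cV[R]_(m + m)) (nu : 'cV[R]_n) : R :=
  let g := \col_j Jinv j (a j 0) in
  \sum_j J j (g j 0) + dotv a (q - g) - 2^-1 * dotv nu (D *m nu)
  + dotv nu (q - d - C *m B *m th) - lam * dotv (const_mx 1) (q - d)
  + dotv eta (H^T *m (q - d) - F).

End Defs.

(* Main.v *)
Require Import Defs.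
From HB Require Import structures.
From mathcomp Require Import all_boot all_order all_algebra.
From mathcomp Require Import all_classical all_reals all_analysis.
From mathcomp Require Import ring lra.
Import Order.TTheory GRing.Theory Num.Theory.
Import numFieldNormedType.Exports.
Local Open Scope ring_scope.

Set Implicit Arguments. Unset Strict Implicit. Unset Printing Implicit Defensive.

Local Open Scope classical_set_scope.

Lemma dnbhs0P (R : realType) (P : R -> Prop) :
  (\forall u \near (0:R)^', P u) <->
  exists2 d : R, 0 < d & forall u : R, u != 0 -> `|u| < d -> P u.
Proof.
split.
- rewrite /dnbhs /within /= => /nbhs_ballP [d d0 Hd].
  exists d => // u u0 ud; apply: Hd => //.
  by rewrite /ball /= sub0r normrN.
- move=> [d d0 Hd]; rewrite /dnbhs /within /=; apply/nbhs_ballP.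
  exists d => // u; rewrite /ball /= sub0r normrN => ud u0; exact: Hd.
Qed.

Lemma lim_side_le (R : realType) (f : R -> R) (l u b : R) :
  f @ (0:R)^' --> l -> u != 0 ->
  (forall k : R, 0 < k -> k < 1 -> f (k * u) <= b) -> l <= b.
Proof.
move=> fl u0 Hb; apply/ler_addgt0Pr => e e0.
move/cvgrPdist_lt: fl => /(_ e e0) /dnbhs0P [d d0 Hd].
set k := Num.min (2^-1) (d / (2 * `|u|)).
have k0 : 0 < k by rewrite lt_min invr_gt0 ltr0n /= divr_gt0 // mulr_gt0 // normr_gt0.
have k1 : k < 1 by rewrite gt_min; apply/orP; left; rewrite invf_lt1 // ltr1n.
have ku : `|k * u| < d.
  rewrite normrM gtr0_norm //.
  have nu : 0 < `|u| by rewrite normr_gt0.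
  apply: (@le_lt_trans _ _ (d / (2 * `|u|) * `|u|)).
    by rewrite ler_pM2r // ge_min lexx orbT.
  rewrite invfM mulrA -mulrA mulVf ?gt_eqF // mulr1.
  by rewrite gtr_pMr // invf_lt1 // ltr1n.
have H := Hd (k * u) (mulf_neq0 (lt0r_neq0 k0) u0) ku. have := Hb k k0 k1.
move: H; rewrite distrC => H1 H2.
have : l - f (k * u) <= `|f (k * u) - l| by rewrite distrC ler_norm.
move: H1 H2; set F := f (k * u); set N := `|F - l|; move=> H1 H2 H3.
have : l < b + e by lra.
by move=> /ltW.
Qed.

Lemma derivable_quot (R : realType) (f : R -> R) (x : R) : derivable f x 1 ->
  (fun h : R => h^-1 * (f (h + x) - f x)) @ (0:R)^' --> f^`() x.
Proof.
move=> df; rewrite /derive1.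
have -> : (fun h => h^-1 * (f (h + x) - f x)) =
          (fun h => h^-1 *: ((f \o shift x) (h *: 1) - f x)).
  by apply/funext => h /=; rewrite /shift [h%:A]mulr1.
by [].
Qed.

Lemma derive1_quot (R : realType) (f : R -> R) (x l : R) :
  (fun h : R => h^-1 * (f (h + x) - f x)) @ (0:R)^' --> l -> f^`() x = l.
Proof. by move=> H; rewrite /derive1; apply: cvg_lim. Qed.

Lemma quot_shift (R : realType) (F G : R -> R) (c l : R) :
  (forall u : R, u != 0 -> F u = G u + c) -> G @ (0:R)^' --> l ->
  F @ (0:R)^' --> l + c.
Proof.
move=> FG Gl.
have : (fun u => G u + c) @ (0:R)^' --> l + c by apply: cvgD => //; exact: cvg_cst.
apply: cvg_trans; apply: near_eq_cvg.
near=> u; rewrite FG //.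
near: u; exact: nbhs_dnbhs_neq.
Unshelve. all: end_near.
Qed.

Lemma derive1_affine (R : realType) (f : R -> R) (a b x : R) :
  (forall s : R, f s = a + b * s) -> f^`() x = b.
Proof.
move=> fE; apply: derive1_quot; rewrite -[b]add0r; apply: (@quot_shift _ _ (cst 0)).
  by move=> u u0; rewrite !fE /= add0r; field.
exact: cvg_cst.
Qed.

Lemma derive1_const_pos (R : realType) (f : R -> R) (t : R) : 0 <= t ->
  derivable f t 1 -> (forall s : R, 0 <= s -> f s = f t) -> f^`() t = 0.
Proof.
move=> t0 df fc; have Q := derivable_quot df.
apply/eqP; rewrite eq_le; apply/andP; split.
  apply: (lim_side_le Q (oner_neq0 R)) => k k0 k1.
  rewrite !mulr1; have -> : f (k + t) = f t by apply: fc; rewrite addr_ge0 // ltW.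
  by rewrite subrr mulr0.
have Q' : (fun h : R => - (h^-1 * (f (h + t) - f t))) @ (0:R)^' --> - derive1 f t.
  exact: cvgN Q.
rewrite -oppr_le0; apply: (lim_side_le Q' (oner_neq0 R)) => k k0 k1.
rewrite !mulr1; have -> : f (k + t) = f t by apply: fc; rewrite addr_ge0 // ltW.
by rewrite subrr mulr0 oppr0.
Qed.

Local Close Scope classical_set_scope.

Local Open Scope classical_set_scope.

Lemma supp_le (R : realType) (J : R -> R) (x y : R) :
  strictly_convex J -> derivable J x 1 ->
  J x + derive1 J x * (y - x) <= J y.
Proof.
move=> cJ dJ.
have [->|yx] := eqVneq y x; first by rewrite subrr mulr0 addr0.
have u0 : y - x != 0 by rewrite subr_eq0.
have Q := derivable_quot dJ.
have Q' : (fun h : R => h^-1 * (J (h + x) - J x) * (y - x)) @ (0:R)^' -->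
           derive1 J x * (y - x) by exact: cvgMl Q.
rewrite -lerBrDl; apply: (lim_side_le Q' u0) => k k0 k1.
have := cJ y x k yx k0 k1.
have -> : k * y + (1 - k) * x = k * (y - x) + x by ring.
move=> H.
have E : (k * (y - x))^-1 * (J (k * (y - x) + x) - J x) * (y - x) =
         (J (k * (y - x) + x) - J x) / k.
  by field; rewrite u0 gt_eqF.
rewrite E ler_pdivrMr //; lra.
Qed.

Lemma supp_lt (R : realType) (J : R -> R) (x y : R) :
  strictly_convex J -> derivable J x 1 -> y != x ->
  J x + derive1 J x * (y - x) < J y.
Proof.
move=> cJ dJ yx.
have H1 := supp_le ((x + y) / 2) cJ dJ.
have xy : x != y by rewrite eq_sym.
have H2 := cJ x y (2^-1) xy.
have h0 : 0 < (2:R)^-1 by rewrite invr_gt0 ltr0n.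
have h1 : (2:R)^-1 < 1 by rewrite invf_lt1 // ltr1n.
move: (H2 h0 h1).
have -> : 2^-1 * x + (1 - 2^-1) * y = (x + y) / 2 by field.
move: H1; set m := J ((x + y) / 2); set D := derive1 J x.
have -> : (x + y) / 2 - x = (y - x) / 2 by field.
move=> H1 H3. 
have : D * ((y - x) / 2) = D * (y - x) / 2 by ring.
lra.
Qed.

Local Close Scope classical_set_scope.

Local Open Scope classical_set_scope.

Lemma Jp_mono (R : realType) (J : R -> R) (x y : R) :
  strictly_convex J -> (forall z, derivable J z 1) -> x <= y ->
  derive1 J x <= derive1 J y.
Proof.
move=> cJ dJ xy.
have H1 := supp_le y cJ (dJ x).
have H2 := supp_le x cJ (dJ y).
have [->|ne] := eqVneq x y; first by [].
have lt : x < y by rewrite lt_neqAle ne.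
move: H1 H2; set A := derive1 J x; set B := derive1 J y => H1 H2.
nra.
Qed.

Lemma g_mono (R : realType) (J g : R -> R) (a b : R) :
  strictly_convex J -> (forall z, derivable J z 1) ->
  cancel (derive1 J) g -> cancel g (derive1 J) -> a <= b -> g a <= g b.
Proof.
move=> cJ dJ gK Kg ab; rewrite leNgt; apply/negP => lt.
have := Jp_mono cJ dJ (ltW lt); rewrite !Kg => ba.
have e : a = b by apply/eqP; rewrite eq_le ab ba.
by move: lt; rewrite e ltxx.
Qed.

Lemma g_cont (R : realType) (J g : R -> R) (a e : R) :
  strictly_convex J -> (forall z, derivable J z 1) ->
  cancel (derive1 J) g -> cancel g (derive1 J) -> 0 < e ->
  exists2 d : R, 0 < d & forall u : R, `|u| < d -> `|g (u + a) - g a| <= e.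
Proof.
move=> cJ dJ gK Kg e0.
set b1 := derive1 J (g a - e); set b2 := derive1 J (g a + e).
have b1a : b1 < a.
  rewrite lt_neqAle; apply/andP; split.
    apply/eqP => E; have := congr1 g E; rewrite /b1 gK => E2.
    by move: e0; lra.
  by rewrite -[X in _ <= X](Kg a); apply: Jp_mono => //; lra.
have ab2 : a < b2.
  rewrite lt_neqAle; apply/andP; split.
    apply/eqP => E; have := congr1 g E; rewrite /b2 gK => E2.
    by move: e0; lra.
  by rewrite -[X in X <= _](Kg a); apply: Jp_mono => //; lra.
exists (Num.min (a - b1) (b2 - a)); first by rewrite lt_min !subr_gt0 b1a ab2.
move=> u; rewrite lt_min => /andP[u1 u2].
have h1 : b1 <= u + a.
  have := ler_norm (- u); rewrite normrN; lra.
have h2 : u + a <= b2.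
  have := ler_norm u; lra.
have := g_mono cJ dJ gK Kg h1; rewrite /b1 gK => g1.
have := g_mono cJ dJ gK Kg h2; rewrite /b2 gK => g2.
rewrite ler_norml; apply/andP; split; lra.
Qed.

Lemma Jstar_quot (R : realType) (J g : R -> R) (a : R) :
  strictly_convex J -> (forall z, derivable J z 1) ->
  cancel (derive1 J) g -> cancel g (derive1 J) ->
  (fun h : R => h^-1 * ((J (g (h + a)) - (h + a) * g (h + a))
                        - (J (g a) - a * g a))) @ (0:R)^' --> - g a.
Proof.
move=> cJ dJ gK Kg; apply/cvgrPdist_le => e e0.
have [d d0 Hd] := g_cont a cJ dJ gK Kg e0.
apply/dnbhs0P; exists d => // h h0 hd.
apply: le_trans (Hd h hd).
set x := g a; set y := g (h + a).
have H1 := supp_le y cJ (dJ x); rewrite /x Kg in H1.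
have H2 := supp_le x cJ (dJ y); rewrite /y Kg in H2.
rewrite -/x -/y in H1 H2.
set q := h^-1 * _.
have qE : q * h = J y - (h + a) * y - (J x - a * x) by rewrite /q; field.
move: q qE => q qE.
have [hp|hn] := ltP 0 h.
  have L : - y <= q <= - x by apply/andP; split; nra.
  rewrite ler_norml; apply/andP; split.
    have := ler_norm (y - x); lra.
  have := ler_norm (y - x); lra.
have hn' : h < 0 by rewrite lt_neqAle h0 hn.
have L : - x <= q <= - y by apply/andP; split; nra.
rewrite ler_norml; apply/andP; split.
  have := ler_norm (x - y); rewrite distrC; lra.
have := ler_norm (x - y); rewrite distrC; lra.
Qed.

Local Close Scope classical_set_scope.

Local Open Scope classical_set_scope.

Lemma nonneg_invariant (R : realType) (f : R -> R) :
  (forall t : R, 0 <= t -> derivable f t 1) -> 0 <= f 0 ->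
  (forall t : R, 0 <= t -> f t <= 0 -> 0 <= derive1 f t) ->
  forall t : R, 0 <= t -> 0 <= f t.
Proof.
move=> df f0 dpos t1 t10; rewrite leNgt; apply/negP => ft1.
have cf : forall t : R, 0 <= t -> {for t, continuous f}.
  by move=> t t0; apply: differentiable_continuous; apply/derivable1_diffP; exact: df.
set S := [set s : R | 0 <= s <= t1 /\ 0 <= f s].
have hS : has_sup S.
  split; first by exists 0; split => //; rewrite lexx t10.
  by exists t1 => s [/andP[_ ?] _].
set s0 := sup S.
have s0ub := sup_upper_bound hS.
have s00 : 0 <= s0 by apply: s0ub; split => //; rewrite lexx t10.
have s0t1 : s0 <= t1 by apply: ge_sup; [case: hS | move=> s [/andP[_ ?] _]].
have fs0 : 0 <= f s0.
  rewrite leNgt; apply/negP => fneg.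
  have e0 : 0 < - f s0 / 2 by rewrite divr_gt0 // oppr_gt0.
  have := cf s0 s00; move/cvgrPdist_lt => /(_ _ e0) /nbhs_ballP [d d0 Hd].
  have [x [/andP[x0 xt1] fx] xs] := sup_adherent d0 hS.
  have xs0 : x <= s0 by apply: s0ub; split => //; rewrite x0 xt1.
  have : ball s0 d x by rewrite /ball /= ger0_norm ?subr_ge0 //; rewrite -/s0 in xs; lra.
  move=> /Hd; rewrite ltr_distlC => /andP[H1 H2]; lra.
have s0lt : s0 < t1.
  rewrite lt_neqAle s0t1 andbT; apply/eqP => E; move: ft1; rewrite -E; lra.
have neg : forall x : R, s0 < x -> x <= t1 -> f x < 0.
  move=> x sx xt; rewrite ltNge; apply/negP => fx.
  have : x <= s0 by apply: s0ub; split => //; rewrite xt andbT; lra.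
  lra.
have := @ger0_derive1_ndecr R f s0 t1.
have H : f s0 <= f t1.
  apply: (@ger0_derive1_ndecr R f s0 t1) => //.
  - move=> x; rewrite in_itv /= => /andP[x1 x2]; apply: df; lra.
  - move=> x; rewrite in_itv /= => /andP[x1 x2]; apply: dpos; first lra.
    by apply: ltW; apply: neg => //; apply: ltW.
  - apply: continuous_in_subspaceT => x; rewrite inE /= in_itv /= => /andP[x1 x2].
    apply: cf; lra.
lra.
Qed.

Local Close Scope classical_set_scope.

Lemma dotvE (R : realType) k (u v : 'cV[R]_k) :
  dotv u v = \sum_j u j 0 * v j 0.
Proof. by rewrite /dotv !mxE; apply: eq_bigr => j _; rewrite mxE. Qed.

Lemma diag_mulE (R : realType) k (T : 'M[R]_k) (v : 'cV[R]_k) i :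
  is_diag_mx T -> (T *m v) i 0 = T i i * v i 0.
Proof.
move=> /is_diag_mxP dT; rewrite mxE (bigD1 i) //= big1 ?addr0 // => j ji.
by rewrite dT ?mul0r // eq_sym.
Qed.

Definition hJ (R : realType) n (J Jinv : 'I_n -> R -> R) j (b : R) :=
  J j (Jinv j b) - b * Jinv j b.

Lemma Lhat_dec (R : realType) n m (J Jinv : 'I_n -> R -> R)
  (D : 'M[R]_n) (d : 'cV[R]_n) (C : 'M[R]_(n, m)) (B : 'M[R]_m)
  (H : 'M[R]_(n, m + m)) (F : 'cV[R]_(m + m))
  (q : 'cV[R]_n) (th : 'cV[R]_m)
  (a : 'cV[R]_n) (lam : R) (eta : 'cV[R]_(m + m)) (nu : 'cV[R]_n) :
  is_diag_mx D ->
  Lhat J Jinv D d C B H F q th a lam eta nu =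
  \sum_j (hJ J Jinv j (a j 0) + a j 0 * q j 0)
  + \sum_j (- 2^-1 * D j j * nu j 0 ^+ 2 + nu j 0 * (q - d - C *m B *m th) j 0)
  - lam * \sum_j (q - d) j 0
  + \sum_k eta k 0 * (H^T *m (q - d) - F) k 0.
Proof.
move=> dD; rewrite /Lhat !dotvE.
have P1 : \sum_j J j ((\col_j0 Jinv j0 (a j0 0)) j 0) +
   \sum_j a j 0 * (q - \col_j0 Jinv j0 (a j0 0)) j 0 =
   \sum_j (hJ J Jinv j (a j 0) + a j 0 * q j 0).
  rewrite -big_split /=; apply: eq_bigr => j _; rewrite /hJ !mxE; ring.
have P2 : - 2^-1 * \sum_j nu j 0 * (D *m nu) j 0 +
   \sum_j nu j 0 * (q - d - C *m B *m th) j 0 =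
   \sum_j (- 2^-1 * D j j * nu j 0 ^+ 2 + nu j 0 * (q - d - C *m B *m th) j 0).
  rewrite mulr_sumr -big_split /=; apply: eq_bigr => j _.
  rewrite diag_mulE //; ring.
have E1 : \sum_j (const_mx 1 : 'cV[R]_n) j 0 * (q - d) j 0 = \sum_j (q - d) j 0.
  by apply: eq_bigr => j _; rewrite mxE mul1r.
rewrite E1 -P1 -P2; ring.
Qed.

Local Open Scope classical_set_scope.

Lemma derive1_quad (R : realType) (f : R -> R) (K A Bq : R) :
  (forall s : R, f s = K + A * s + Bq * s ^+ 2) -> derive1 f 0 = A.
Proof.
move=> fE; apply: derive1_quot; rewrite -[A]add0r.
apply: (@quot_shift _ _ (fun u : R => Bq * u)).
  by move=> u u0; rewrite !fE addr0; field.
rewrite -[X in _ --> X](mulr0 Bq); apply: cvgMr.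
exact: cvg_within.
Qed.

Lemma derive1_Jstar (R : realType) (J g : R -> R) (f : R -> R) (K a c : R) :
  strictly_convex J -> (forall z, derivable J z 1) ->
  cancel (derive1 J) g -> cancel g (derive1 J) ->
  (forall s : R, f s = K + (J (g (a + s)) - (a + s) * g (a + s)) + (a + s) * c) ->
  derive1 f 0 = - g a + c.
Proof.
move=> cJ dJ gK Kg fE; apply: derive1_quot.
have := Jstar_quot (a:=a) cJ dJ gK Kg.
move/(@quot_shift R (fun h : R => h^-1 * (f (h + 0) - f 0)) _ c (- g a)).
apply.
move=> u u0; rewrite !fE !addr0 [a + u]addrC; by field.
Qed.

Lemma sum_pert (R : realType) k (Fn : 'I_k -> R -> R) (a : 'cV[R]_k) i (s : R) :
  \sum_j Fn j ((a + s *: delta_mx i 0) j 0) =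
  \sum_j Fn j (a j 0) - Fn i (a i 0) + Fn i (a i 0 + s).
Proof.
rewrite (bigD1 i) //= [X in _ = X - _ + _](bigD1 i) //=.
rewrite !mxE !eqxx /= mulr1.
have -> : \sum_(j < k | j != i) Fn j ((a + s *: delta_mx i 0) j 0) =
          \sum_(j < k | j != i) Fn j (a j 0).
  by apply: eq_bigr => j ji; rewrite !mxE (negbTE ji) /= mulr0 addr0.
ring.
Qed.

Local Close Scope classical_set_scope.

Section G.
Variables (R : realType) (n m : nat) (J Jinv : 'I_n -> R -> R)
  (D : 'M[R]_n) (d : 'cV[R]_n) (C : 'M[R]_(n, m)) (B : 'M[R]_m)
  (H : 'M[R]_(n, m + m)) (F : 'cV[R]_(m + m)).
Hypothesis dD : is_diag_mx D.
Let Lh := Lhat J Jinv D d C B H F.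

Lemma grad_a q th a lam eta nu i :
  strictly_convex (J i) -> (forall z, derivable (J i) z 1) ->
  cancel (derive1 (J i)) (Jinv i) -> cancel (Jinv i) (derive1 (J i)) ->
  grad (fun x => Lh q th x lam eta nu) a i 0 = - Jinv i (a i 0) + q i 0.
Proof.
move=> cJ dJ gK Kg; rewrite mxE.
set K := \sum_j (hJ J Jinv j (a j 0) + a j 0 * q j 0)
   - (hJ J Jinv i (a i 0) + a i 0 * q i 0)
   + \sum_j (- 2^-1 * D j j * nu j 0 ^+ 2 + nu j 0 * (q - d - C *m B *m th) j 0)
   - lam * \sum_j (q - d) j 0
   + \sum_k eta k 0 * (H^T *m (q - d) - F) k 0.
have Hf : forall s : R, Lh q th (a + s *: delta_mx i 0) lam eta nu =
  K + (J i (Jinv i (a i 0 + s)) - (a i 0 + s) * Jinv i (a i 0 + s)) + (a i 0 + s) * q i 0.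
  move=> s; rewrite /Lh Lhat_dec // (sum_pert (fun j b => hJ J Jinv j b + b * q j 0)).
  by rewrite /K /hJ; ring.
exact: (derive1_Jstar cJ dJ gK Kg Hf).
Qed.

Definition Kall (q : 'cV[R]_n) (th : 'cV[R]_m) (a : 'cV[R]_n) (lam : R) (eta : 'cV[R]_(m + m)) (nu : 'cV[R]_n) :=
  \sum_j (hJ J Jinv j (a j 0) + a j 0 * q j 0)
   + \sum_j (- 2^-1 * D j j * nu j 0 ^+ 2 + nu j 0 * (q - d - C *m B *m th) j 0)
   - lam * \sum_j (q - d) j 0
   + \sum_k eta k 0 * (H^T *m (q - d) - F) k 0.

Lemma grad_nu q th a lam eta nu i :
  grad (fun x => Lh q th a lam eta x) nu i 0 =
  - D i i * nu i 0 + (q - d - C *m B *m th) i 0.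
Proof.
rewrite mxE.
have Hf : forall s : R, Lh q th a lam eta (nu + s *: delta_mx i 0) =
  Kall q th a lam eta nu + (- D i i * nu i 0 + (q - d - C *m B *m th) i 0) * s
  + (- 2^-1 * D i i) * s ^+ 2.
  move=> s; rewrite /Lh Lhat_dec // (sum_pert (fun j b => - 2^-1 * D j j * b ^+ 2 +
   b * (q - d - C *m B *m th) j 0)) /Kall.
  by field.
exact: (derive1_quad Hf).
Qed.

Lemma grad_lam q th a l eta nu :
  derive1 (fun x => Lh q th a x eta nu) l = - \sum_j (q - d) j 0.
Proof.
have Hf : forall s : R, Lh q th a s eta nu =
  Kall q th a 0 eta nu + (- \sum_j (q - d) j 0) * s.
  by move=> s; rewrite /Lh Lhat_dec // /Kall; ring.
exact: (derive1_affine _ Hf).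
Qed.

Lemma grad_eta q th a lam eta nu k :
  grad (fun x => Lh q th a lam x nu) eta k 0 = (H^T *m (q - d) - F) k 0.
Proof.
rewrite mxE.
have Hf : forall s : R, Lh q th a lam (eta + s *: delta_mx k 0) nu =
  Kall q th a lam eta nu + (H^T *m (q - d) - F) k 0 * s.
  move=> s; rewrite /Lh Lhat_dec // (sum_pert (fun j b => b * (H^T *m (q - d) - F) j 0)).
  by rewrite /Kall; ring.
exact: (derive1_affine _ Hf).
Qed.

Lemma grad_th q th a lam eta nu i :
  grad (fun x => Lh q x a lam eta nu) th i 0 =
  - \sum_j nu j 0 * (C *m B *m (delta_mx i 0 : 'cV[R]_m)) j 0.
Proof.
rewrite mxE.
have Hf : forall s : R, Lh q (th + s *: delta_mx i 0) a lam eta nu =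
  Kall q th a lam eta nu + (- \sum_j nu j 0 * (C *m B *m (delta_mx i 0 : 'cV[R]_m)) j 0) * s.
  move=> s; rewrite /Lh Lhat_dec //.
  have -> : \sum_j (- 2^-1 * D j j * nu j 0 ^+ 2 +
            nu j 0 * (q - d - C *m B *m (th + s *: delta_mx i 0)) j 0) =
          \sum_j (- 2^-1 * D j j * nu j 0 ^+ 2 + nu j 0 * (q - d - C *m B *m th) j 0)
          - s * \sum_j nu j 0 * (C *m B *m (delta_mx i 0 : 'cV[R]_m)) j 0.
    rewrite mulr_sumr -sumrB; apply: eq_bigr => j _.
    rewrite mulmxDr -scalemxAr !mxE; ring.
  by rewrite /Kall; ring.
exact: (derive1_affine _ Hf).
Qed.

End G.

Lemma sum_npos_eq0 (R : realType) k (Fn : 'I_k -> R) :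
  (forall j, Fn j <= 0) -> \sum_j Fn j = 0 -> forall j, Fn j = 0.
Proof.
move=> H S j; apply/eqP; rewrite -oppr_eq0; apply/eqP.
apply: (@psumr_eq0P _ _ predT (fun j => - Fn j)) => //.
  by move=> i _; rewrite oppr_ge0.
by rewrite sumrN S oppr0.
Qed.

Lemma pd_zero (R : realType) k (T : 'M[R]_k) (v : 'cV[R]_k) i :
  posdiag T -> (T *m v) i 0 = 0 -> v i 0 = 0.
Proof.
move=> [dT pT]; rewrite diag_mulE // => /eqP; rewrite mulf_eq0 => /orP[|/eqP //].
by rewrite gt_eqF.
Qed.

Lemma alpha_le (R : realType) (J g : R -> R) (a b : R) :
  strictly_convex J -> (forall z, derivable J z 1) ->
  cancel (derive1 J) g -> cancel g (derive1 J) ->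
  (J (g b) - b * g b + b * g a) - (J (g a) - a * g a + a * g a) <= 0.
Proof.
move=> cJ dJ gK Kg.
have := supp_le (g a) cJ (dJ (g b)); rewrite Kg => H; lra.
Qed.

Lemma alpha_eq (R : realType) (J g : R -> R) (a b : R) :
  strictly_convex J -> (forall z, derivable J z 1) ->
  cancel (derive1 J) g -> cancel g (derive1 J) ->
  (J (g b) - b * g b + b * g a) - (J (g a) - a * g a + a * g a) = 0 -> b = a.
Proof.
move=> cJ dJ gK Kg E.
have [e|ne] := eqVneq (g a) (g b).
  by rewrite -(Kg a) -(Kg b) e.
have := supp_lt cJ (dJ (g b)) ne; rewrite Kg => H; lra.
Qed.

Unset Implicit Arguments. Set Strict Implicit. Set Printing Implicit Defensive.

Theorem proposition2 (R : realType) (n m : nat)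
  (src dst : 'I_m -> 'I_n)
  (B : 'M[R]_m) (D : 'M[R]_n) (Ldag : 'M[R]_n)
  (Fbar Funder : 'cV[R]_m) (d : 'cV[R]_n)
  (J Jinv : 'I_n -> R -> R)
  (Tq : 'M[R]_n) (Tth : 'M[R]_m) (Ta : 'M[R]_n) (Tlam : R)
  (Teta : 'M[R]_(m + m)) (Tnu : 'M[R]_n)
  (qs : 'cV[R]_n) (ths : 'cV[R]_m) (als : 'cV[R]_n) (lams : R)
  (etas : 'cV[R]_(m + m)) (nus : 'cV[R]_n)
  (q : R -> 'cV[R]_n) (th : R -> 'cV[R]_m) (al : R -> 'cV[R]_n)
  (lam : R -> R) (eta : R -> 'cV[R]_(m + m)) (nu : R -> 'cV[R]_n) :
  let C := incidence R src dst in
  let L := C *m B *m C^T in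
  let H := Hmat C B Ldag in
  let F := col_mx Fbar (- Funder) in
  let Lh := Lhat J Jinv D d C B H F in
  connected_digraph src dst ->
  posdiag B -> posdiag D ->
  is_MP_inverse L Ldag ->
  (forall j, strictly_convex (J j)) ->
  (forall j, twice_differentiable (J j)) ->
  (forall j, cancel (derive1 (J j)) (Jinv j)) ->
  (forall j, cancel (Jinv j) (derive1 (J j))) ->
  posdiag Tq -> posdiag Tth -> posdiag Ta -> 0 < Tlam ->
  posdiag Teta -> posdiag Tnu ->
  (* (zs, sigmas) is an equilibrium, with etas >= 0 *)
  (forall j, 0 <= etas j 0) ->
  grad (fun x => Lh x ths als lams etas nus) qs = 0 ->
  grad (fun x => Lh qs x als lams etas nus) ths = 0 ->
  grad (fun x => Lh qs ths x lams etas nus) als = 0 ->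
  derive1 (fun x => Lh qs ths als x etas nus) lams = 0 ->
  proj_plus (grad (fun x => Lh qs ths als lams x nus) etas) etas = 0 ->
  grad (fun x => Lh qs ths als lams etas x) nus = 0 ->
  (* (z(t), sigma(t)) is a trajectory of the closed-loop system for t >= 0 *)
  (forall t, 0 <= t ->
     [/\ vderivable q t, vderivable th t, vderivable al t,
         derivable lam t 1 & vderivable eta t /\ vderivable nu t]) ->
  (forall t, 0 <= t ->
     Tq *m dvec q t =
       - grad (fun x => Lh x (th t) (al t) (lam t) (eta t) (nu t)) (q t)) ->
  (forall t, 0 <= t ->
     Tth *m dvec th t =
       - grad (fun x => Lh (q t) x (al t) (lam t) (eta t) (nu t)) (th t)) ->
  (forall t, 0 <= t ->
     Ta *m dvec al t =
       grad (fun x => Lh (q t) (th t) x (lam t) (eta t) (nu t)) (al t)) ->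
  (forall t, 0 <= t ->
     Tlam * derive1 lam t =
       derive1 (fun x => Lh (q t) (th t) (al t) x (eta t) (nu t)) (lam t)) ->
  (forall t, 0 <= t ->
     Teta *m dvec eta t =
       proj_plus (grad (fun x => Lh (q t) (th t) (al t) (lam t) x (nu t)) (eta t))
                 (eta t)) ->
  (forall t, 0 <= t ->
     Tnu *m dvec nu t =
       grad (fun x => Lh (q t) (th t) (al t) (lam t) (eta t) x) (nu t)) ->
  (forall j, 0 <= eta 0 j 0) ->
  (forall t, 0 <= t -> Lh qs ths (al t) (lam t) (eta t) (nu t) =
                       Lh qs ths als lams etas nus) ->
  (forall t, 0 <= t -> Lh (q t) (th t) als lams etas nus =
                       Lh qs ths als lams etas nus) ->
  forall t, 0 <= t ->
    [/\ dvec q t = 0, dvec th t = 0, dvec al t = 0,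
        derive1 lam t = 0 & dvec eta t = 0 /\ dvec nu t = 0].
Proof.
move=> C L H F Lh conn pB pD mp cvx tw gK Kg pTq pTth pTa Tlam0 pTeta pTnu
  etas0 Eq Eth Ea Elam Eeta Enu traj Dq Dth Da Dlam Deta Dnu eta00 Lc1 _ t t0.
have dD : is_diag_mx D by case: pD.
have dJ : forall j z, derivable (J j) z 1 by move=> j z; case: (tw j z).
unfold Lh in *.
have Fa : forall i, qs i 0 = Jinv i (als i 0).
  move=> i; have := congr1 (fun M : 'cV[R]_n => M i 0) Ea.
  rewrite /= (grad_a d C B H F dD _ _ _ _ _ _ (cvx i) (dJ i) (gK i) (Kg i)) mxE => E.
  lra.
have Fnu : forall i, (qs - d - C *m B *m ths) i 0 = D i i * nus i 0.
  move=> i; have := congr1 (fun M : 'cV[R]_n => M i 0) Enu.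
  rewrite /= grad_nu // [X in _ = X]mxE => E; lra.
have Flam : \sum_j (qs - d) j 0 = 0.
  by move: Elam; rewrite grad_lam // => E; lra.
have Feta : forall k, (H^T *m (qs - d) - F) k 0 <= 0 /\
                      etas k 0 * (H^T *m (qs - d) - F) k 0 = 0.
  move=> k; have := congr1 (fun M : 'cV[R]_(m + m) => M k 0) Eeta.
  rewrite /= /proj_plus [X in X = _]mxE [X in _ = X]mxE grad_eta //.
  case: ifP => [/orP[h|h] E|].
  - by move: h; rewrite E ltxx.
  - by rewrite E mulr0 lexx.
  - move=> /negbT; rewrite negb_or -!leNgt => /andP[h1 h2] _; split => //.
    have -> : etas k 0 = 0 by apply/eqP; rewrite eq_le h2 etas0.
    by rewrite mul0r.
have Fth : forall i, \sum_j nus j 0 * (C *m B *m (delta_mx i 0 : 'cV[R]_m)) j 0 = 0.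
  move=> i; have := congr1 (fun M : 'cV[R]_m => M i 0) Eth.
  rewrite /= grad_th // [X in _ = X]mxE => E; lra.
have etapos : forall s k, 0 <= s -> 0 <= eta s k 0.
  move=> s k s0; apply: (@nonneg_invariant R (fun s => eta s k 0)) => //.
  - by move=> r r0; case: (traj r r0) => _ _ _ _ [ve _]; exact: ve.
  - move=> r r0 fr.
    have := congr1 (fun M : 'cV[R]_(m + m) => M k 0) (Deta r r0).
    rewrite /= diag_mulE; last by case: pTeta.
    rewrite /proj_plus [X in _ = X]mxE [X in _ * X]mxE.
    have -> : (0 < eta r k 0) = false by apply/negbTE; rewrite -leNgt.
    rewrite orbF.
    have Tk : 0 < Teta k k by case: pTeta.
    case: ifP => [hp|hn] E.
      have : 0 <= Teta k k * derive1 (fun s => eta s k 0) r by rewrite E ltW.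
      by rewrite pmulr_rge0.
    have : 0 <= Teta k k * derive1 (fun s => eta s k 0) r by rewrite E.
    by rewrite pmulr_rge0.
have opt : forall s, 0 <= s -> [/\ al s = als, nu s = nus &
    forall k, eta s k 0 * (H^T *m (qs - d) - F) k 0 = 0].
  move=> s s0.
  have E := Lc1 s s0; rewrite !Lhat_dec // Flam !mulr0 in E.
  set TA := fun j : 'I_n => (hJ J Jinv j (al s j 0) + al s j 0 * qs j 0)
                          - (hJ J Jinv j (als j 0) + als j 0 * qs j 0).
  set TN := fun j : 'I_n =>
     (- 2^-1 * D j j * nu s j 0 ^+ 2 + nu s j 0 * (qs - d - C *m B *m ths) j 0)
   - (- 2^-1 * D j j * nus j 0 ^+ 2 + nus j 0 * (qs - d - C *m B *m ths) j 0).
  set TE := fun k : 'I_(m + m) => eta s k 0 * (H^T *m (qs - d) - F) k 0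
                                 - etas k 0 * (H^T *m (qs - d) - F) k 0.
  have E2 : \sum_j TA j + \sum_j TN j + \sum_k TE k = 0.
    rewrite /TA /TN /TE !sumrB; lra.
  have TAle : forall j, TA j <= 0.
    move=> j; rewrite /TA /hJ Fa; exact: alpha_le (cvx j) (dJ j) (gK j) (Kg j).
  have TNE : forall j, TN j = - (2^-1 * D j j * (nu s j 0 - nus j 0) ^+ 2).
    by move=> j; rewrite /TN Fnu; field.
  have TNle : forall j, TN j <= 0.
    move=> j; rewrite TNE oppr_le0 mulr_ge0 ?sqr_ge0 // mulr_ge0 //.
    by case: pD => _ /(_ j) /ltW.
  have TEle : forall k, TE k <= 0.
    move=> k; rewrite /TE (Feta k).2 subr0.
    by apply: mulr_ge0_le0; [exact: etapos | exact: (Feta k).1].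
  have S1 : \sum_j TA j <= 0 by apply: sumr_le0 => j _; exact: TAle.
  have S2 : \sum_j TN j <= 0 by apply: sumr_le0 => j _; exact: TNle.
  have S3 : \sum_k TE k <= 0 by apply: sumr_le0 => k _; exact: TEle.
  have SA0 : \sum_j TA j = 0 by lra.
  have SN0 : \sum_j TN j = 0 by lra.
  have SE0 : \sum_k TE k = 0 by lra.
  have TA0 := sum_npos_eq0 TAle SA0.
  have TN0 := sum_npos_eq0 TNle SN0.
  have TE0 := sum_npos_eq0 TEle SE0.
  split.
  - apply/matrixP => i j; rewrite (ord1 j).
    apply: (alpha_eq (cvx i) (dJ i) (gK i) (Kg i)).
    by have := TA0 i; rewrite /TA /hJ Fa.
  - apply/matrixP => i j; rewrite (ord1 j).
    have := TN0 i; rewrite TNE => /eqP; rewrite oppr_eq0 !mulf_eq0 invr_eq0.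
    have Dp : (D i i == 0) = false by case: pD => _ /(_ i) /gt_eqF.
    rewrite Dp pnatr_eq0 /= orbb subr_eq0 => /eqP //.
  - move=> k; have := TE0 k; rewrite /TE (Feta k).2 subr0 //.
have alE : forall s, 0 <= s -> al s = als by move=> s s0; case: (opt s s0).
have nuE : forall s, 0 <= s -> nu s = nus by move=> s s0; case: (opt s s0).
have etaZ : forall s k, 0 <= s -> eta s k 0 * (H^T *m (qs - d) - F) k 0 = 0.
  by move=> s k s0; case: (opt s s0) => _ _; apply.
have dal : forall s, 0 <= s -> dvec al s = 0.
  move=> s s0; apply/matrixP => i j; rewrite (ord1 j) !mxE.
  apply: (derive1_const_pos s0).
  - by case: (traj s s0) => _ _ va _ _; exact: va.
  - by move=> r r0; rewrite (alE r r0) (alE s s0).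
have dnu : dvec nu t = 0.
  apply/matrixP => i j; rewrite (ord1 j) !mxE.
  apply: (derive1_const_pos t0).
  - by case: (traj t t0) => _ _ _ _ [_ vn]; exact: vn.
  - by move=> r r0; rewrite (nuE r r0) (nuE t t0).
have qE : forall s, 0 <= s -> q s = qs.
  move=> s s0; apply/matrixP => i j; rewrite (ord1 j).
  have := congr1 (fun M : 'cV[R]_n => M i 0) (Da s s0).
  rewrite /= dal // mulmx0.
  rewrite (grad_a d C B H F dD _ _ _ _ _ _ (cvx i) (dJ i) (gK i) (Kg i)).
  rewrite mxE (alE s s0) -Fa => E; lra.
have dq : dvec q t = 0.
  apply/matrixP => i j; rewrite (ord1 j) !mxE.
  apply: (derive1_const_pos t0).
  - by case: (traj t t0) => vq _ _ _ _; exact: vq.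
  - by move=> r r0; rewrite (qE r r0) (qE t t0).
have dth : dvec th t = 0.
  apply/matrixP => i j; rewrite (ord1 j) [X in _ = X]mxE.
  apply: (pd_zero (T := Tth)) => //.
  by rewrite (Dth t t0) mxE grad_th // (nuE t t0) Fth !oppr0.
have dlam : derive1 lam t = 0.
  have := Dlam t t0; rewrite grad_lam // (qE t t0) Flam oppr0 => /eqP.
  by rewrite mulf_eq0 (gt_eqF Tlam0) /= => /eqP.
have deta : dvec eta t = 0.
  apply/matrixP => k z; rewrite (ord1 z) [X in _ = X]mxE.
  apply: (pd_zero (T := Teta)) => //.
  rewrite (Deta t t0) /proj_plus mxE grad_eta // (qE t t0).
  case: ifP => // /orP[h|h].
    by have := (Feta k).1; rewrite leNgt h.
  have := etaZ t k t0 => /eqP; rewrite mulf_eq0 (gt_eqF h) /= => /eqP //.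
by split => //; exact: dal.
Qed.
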